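(* Let $\mu:\mathbb{R}^{n\times n}\to\mathbb{R}$ be the matrix measure induced by an orthant-monotonic norm on $\mathbb{R}^n$. Then for every $A\in\mathbb{R}^{n\times n}$ and every diagonal matrix $D\in\mathbb{R}^{n\times n}$ with diagonal entries $d_{11},\dots,d_{nn}$, \[\mu(A)-\max_i\{d_{ii}\}\le \mu(A-D)\le \mu(A)-\min_i\{d_{ii}\}.\]
   Context: For a vector norm $|\cdot|$ on $\mathbb{R}^n$, the induced matrix norm is $\|A\|=\max_{|x|=1}|Ax|$ and the induced matrix measure is $\mu(A)=\lim_{\varepsilon\to0^+}(\|I_n+\varepsilon A\|-1)/\varepsilon$. A norm $|\cdot|$ on $\mathbb{R}^n$ is orthant-monotonic if for all $x,y\in\mathbb{R}^n$: whenever $x_iy_i\ge 0$ and $|x_i|\le|y_i|$ for all $i$, then $|x|\le|y|$. *)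

(* Defs.v *)
From HB Require Import structures.
From mathcomp Require Import all_boot all_order all_algebra.
From mathcomp Require Import all_classical all_reals all_analysis.
Set Implicit Arguments. Unset Strict Implicit. Unset Printing Implicit Defensive.
Import Order.TTheory GRing.Theory Num.Theory.
Import numFieldNormedType.Exports.
Local Open Scope classical_set_scope.
Local Open Scope ring_scope.

Definition is_vnorm (R : realType) (n : nat) (nu : 'cV[R]_n -> R) : Prop :=
  [/\ (forall x, 0 <= nu x),
      (forall x, nu x = 0 -> x = 0),
      (forall (a : R) x, nu (a *: x) = `|a| * nu x) &
      (forall x y, nu (x + y) <= nu x + nu y)].

Definition orthant_monotonic (R : realType) (n : nat) (nu : 'cV[R]_n -> R) : Prop :=
  forall x y : 'cV[R]_n,
    (forall i, 0 <= x i ord0 * y i ord0) ->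
    (forall i, `|x i ord0| <= `|y i ord0|) ->
    nu x <= nu y.

Definition induced_norm (R : realType) (n : nat) (nu : 'cV[R]_n -> R)
  (A : 'M[R]_n) : R :=
  sup [set nu (A *m x) | x in [set x | nu x = 1]].

Definition matrix_measure (R : realType) (n : nat) (nu : 'cV[R]_n -> R)
  (A : 'M[R]_n) : R :=
  lim ((fun e : R => ((induced_norm nu (1%:M + e *: A) - 1) / e : R)) @ (0 : R)^'+).

Definition max_diag (R : realType) (n : nat) (D : 'M[R]_n.+1) : R :=
  \big[Num.max/D ord0 ord0]_(i < n.+1) D i i.
Definition min_diag (R : realType) (n : nat) (D : 'M[R]_n.+1) : R :=
  \big[Num.min/D ord0 ord0]_(i < n.+1) D i i.

(* Main.v *)
Require Import Defs.
From HB Require Import structures.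
From mathcomp Require Import all_boot all_order all_algebra.
From mathcomp Require Import all_classical all_reals all_analysis.
From mathcomp Require Import ring lra.
Import Order.TTheory GRing.Theory Num.Theory.
Import numFieldNormedType.Exports.
Local Open Scope ring_scope.
Local Open Scope classical_set_scope.

Section S.
Variables (R : realType) (n : nat) (nu : 'cV[R]_n.+1 -> R).
Hypothesis Hn : is_vnorm nu.
Hypothesis Ho : orthant_monotonic nu.

Lemma nu_ge0 (x : 'cV[R]_n.+1) : 0 <= nu x. Proof. by case: Hn. Qed.
Lemma nu_eq0 (x : 'cV[R]_n.+1) : nu x = 0 -> x = 0. Proof. by case: Hn => _ H _ _; apply: H. Qed.
Lemma nuZ a (x : 'cV[R]_n.+1) : nu (a *: x) = `|a| * nu x. Proof. by case: Hn. Qed.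
Lemma nuD (x y : 'cV[R]_n.+1) : nu (x + y) <= nu x + nu y. Proof. by case: Hn. Qed.
Lemma nu0 : nu 0 = 0.
Proof. by rewrite -(scale0r (0 : 'cV[R]_n.+1)) nuZ normr0 mul0r. Qed.

Lemma nuN (x : 'cV[R]_n.+1) : nu (- x) = nu x.
Proof. by rewrite -scaleN1r nuZ normrN1 mul1r. Qed.

Definition ev (j : 'I_n.+1) : 'cV[R]_n.+1 := delta_mx j ord0.

Lemma nu_ev_gt0 j : 0 < nu (ev j).
Proof.
rewrite lt_neqAle nu_ge0 andbT; apply/eqP => /esym /nu_eq0 /matrixP /(_ j ord0).
by rewrite !mxE !eqxx /= => /eqP; rewrite oner_eq0.
Qed.

Lemma coord_bound (x : 'cV[R]_n.+1) j : `|x j ord0| * nu (ev j) <= nu x.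
Proof.
rewrite -nuZ; apply: Ho => i; rewrite !mxE; case: (eqVneq i j) => [->|_] /=;
  rewrite ?eqxx ?mulr1 ?mulr0 ?mul0r ?normr0 ?sqr_ge0 //.
Qed.

Lemma vec_sum (x : 'cV[R]_n.+1) : x = \sum_j x j ord0 *: ev j.
Proof.
apply/matrixP => i k; rewrite (ord1 k) summxE (bigD1 i) //= big1 ?addr0.
  by rewrite !mxE !eqxx mulr1.
by move=> j /negPf ji; rewrite !mxE eq_sym ji mulr0.
Qed.

Lemma nu_sum I (r : seq I) (F : I -> 'cV[R]_n.+1) :
  nu (\sum_(i <- r) F i) <= \sum_(i <- r) nu (F i).
Proof.
apply: (big_rec2 (fun y1 y2 => nu y1 <= y2)); first by rewrite nu0.
by move=> i y1 y2 _ H; apply: le_trans (nuD _ _) _; rewrite lerD2l.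
Qed.

Definition Kb (M : 'M[R]_n.+1) := \sum_j nu (M *m ev j) / nu (ev j).

Lemma mx_bound M (x : 'cV[R]_n.+1) : nu (M *m x) <= Kb M * nu x.
Proof.
rewrite {1}(vec_sum x) mulmx_sumr /Kb mulr_suml.
apply: le_trans; first exact: nu_sum.
apply: ler_sum => j _.
rewrite -scalemxAr nuZ.
have hp := nu_ev_gt0 j.
have h : `|x j ord0| <= nu x / nu (ev j).
  by rewrite ler_pdivlMr //; exact: coord_bound.
apply: le_trans (ler_wpM2r (nu_ge0 _) h) _.
by rewrite le_eqVlt; apply/orP; left; apply/eqP; field; rewrite lt0r_neq0.
Qed.

Definition u0 : 'cV[R]_n.+1 := (nu (ev ord0))^-1 *: ev ord0.
Lemma nu_u0 : nu u0 = 1.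
Proof.
have hp := nu_ev_gt0 ord0.
by rewrite nuZ ger0_norm ?invr_ge0 ?ltW // mulVf // lt0r_neq0.
Qed.

Lemma S_has_sup (M : 'M[R]_n.+1) :
  has_sup [set nu (M *m x) | x in [set x | nu x = 1]].
Proof.
split; first by exists (nu (M *m u0)), u0 => //; exact: nu_u0.
exists (Kb M) => y [x /= hx <-]; by have := mx_bound M x; rewrite hx mulr1.
Qed.

Lemma N_ge (M : 'M[R]_n.+1) {x} : nu x = 1 -> nu (M *m x) <= induced_norm nu M.
Proof. by move=> hx; apply: (sup_upper_bound (S_has_sup M)); exists x. Qed.

Lemma N_le (M : 'M[R]_n.+1) c :
  (forall x, nu x = 1 -> nu (M *m x) <= c) -> induced_norm nu M <= c.
Proof.
move=> H; apply: ge_sup; first by case: (S_has_sup M).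
by move=> y [x /= hx <-]; apply: H.
Qed.

Lemma N_ub (M : 'M[R]_n.+1) x : nu (M *m x) <= induced_norm nu M * nu x.
Proof.
have [->|x0] := eqVneq x 0; first by rewrite mulmx0 nu0 mulr0.
have hp : 0 < nu x by rewrite lt_neqAle nu_ge0 andbT; apply/eqP => /esym /nu_eq0; apply/eqP.
have h1 : nu ((nu x)^-1 *: x) = 1.
  by rewrite nuZ ger0_norm ?invr_ge0 ?ltW // mulVf // lt0r_neq0.
have h2 := N_ge M h1.
have hi : 0 <= (nu x)^-1 by rewrite invr_ge0 ltW.
rewrite -scalemxAr nuZ (ger0_norm hi) in h2.
by rewrite -ler_pdivrMr // mulrC.
Qed.

Lemma N_ge0 (M : 'M[R]_n.+1) : 0 <= induced_norm nu M.
Proof. apply: le_trans (N_ge M nu_u0); exact: nu_ge0. Qed.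

Lemma N1 : induced_norm nu 1%:M = 1.
Proof.
apply/eqP; rewrite eq_le; apply/andP; split.
  by apply: N_le => x hx; rewrite mul1mx hx.
by have := N_ge 1%:M nu_u0; rewrite mul1mx nu_u0.
Qed.

Lemma N_conv (P Q : 'M[R]_n.+1) a b : 0 <= a -> 0 <= b ->
  induced_norm nu (a *: P + b *: Q) <= a * induced_norm nu P + b * induced_norm nu Q.
Proof.
move=> ha hb; apply: N_le => x hx.
rewrite mulmxDl -!scalemxAl; apply: le_trans (nuD _ _) _.
rewrite !nuZ !ger0_norm //; apply: lerD; apply: ler_wpM2l => //.
  by have := N_ub P x; rewrite hx mulr1.
by have := N_ub Q x; rewrite hx mulr1.
Qed.

Lemma N_lower (A : 'M[R]_n.+1) e : 0 <= e ->
  1 - e * induced_norm nu A <= induced_norm nu (1%:M + e *: A).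
Proof.
move=> he; apply: le_trans (N_ge _ nu_u0).
rewrite mulmxDl mul1mx -scalemxAl.
have h : nu u0 <= nu (u0 + e *: (A *m u0)) + nu (e *: (A *m u0)).
  by rewrite -{1}(addrK (e *: (A *m u0)) u0); apply: le_trans (nuD _ _) _; rewrite nuN.
rewrite nu_u0 nuZ ger0_norm // in h.
have := N_ge A nu_u0 => h2.
have : e * nu (A *m u0) <= e * induced_norm nu A by apply: ler_wpM2l.
lra.
Qed.

Lemma N_diag (E : 'M[R]_n.+1) m : is_diag_mx E -> (forall i, 0 <= E i i <= m) ->
  induced_norm nu E <= m.
Proof.
move=> /is_diag_mxP hd hE; apply: N_le => x hx.
have hm : 0 <= m by case/andP: (hE ord0) => h1 h2; apply: le_trans h2.
have hEx i : (E *m x) i ord0 = E i i * x i ord0.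
  rewrite mxE (bigD1 i) //= big1 ?addr0 // => j /negPf ji.
  by rewrite hd ?mul0r // eq_sym; apply/negbT.
have -> : m = nu (m *: x) by rewrite nuZ hx mulr1 ger0_norm.
apply: Ho => i; rewrite hEx mxE; case/andP: (hE i) => h1 h2.
  have := sqr_ge0 (x i ord0); rewrite expr2 => hs.
  by rewrite mulrACA mulr_ge0 // mulr_ge0.
by rewrite !normrM (ger0_norm h1) (ger0_norm hm) ler_wpM2r.
Qed.


Definition fm (M : 'M[R]_n.+1) (e : R) : R := (induced_norm nu (1%:M + e *: M) - 1) / e.

Lemma fm_mono M s t : 0 < s -> s <= t -> fm M s <= fm M t.
Proof.
move=> s0 st; have t0 : 0 < t by apply: lt_le_trans st.
have tn0 : t != 0 by rewrite lt0r_neq0.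
set q := s / t.
have q0 : 0 <= q by rewrite divr_ge0 // ltW.
have q1 : 0 <= 1 - q by rewrite subr_ge0 ler_pdivrMr // mul1r.
have eq : 1%:M + s *: M = q *: (1%:M + t *: M) + (1 - q) *: (1%:M : 'M[R]_n.+1).
  rewrite scalerDr scalerA divfK // scalerBl scale1r.
  by rewrite [RHS]addrC addrA subrK.
have h := N_conv (1%:M + t *: M) 1%:M _ _ q0 q1.
rewrite -eq N1 mulr1 in h.
rewrite /fm ler_pdivrMr //.
have -> : (induced_norm nu (1%:M + t *: M) - 1) / t * s
   = q * induced_norm nu (1%:M + t *: M) - q by rewrite /q; field.
lra.
Qed.

Lemma fm_lb M e : 0 < e -> - induced_norm nu M <= fm M e.
Proof.
move=> e0; have h := N_lower M _ (ltW e0).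
rewrite /fm ler_pdivlMr //.
have -> : - induced_norm nu M * e = - (e * induced_norm nu M) by rewrite mulNr mulrC.
lra.
Qed.

Lemma fm_cvg M : cvg (fm M @ (0:R)^'+).
Proof.
apply: nondecreasing_at_right_is_cvgr.
  near=> x => a b; rewrite !in_itv /= => /andP[a0 _] /andP[b0 _] ab.
  exact: fm_mono.
near=> x; exists (- induced_norm nu M) => y [z hz <-].
move: hz; rewrite /= in_itv /= => /andP[z0 _].
exact: fm_lb.
Unshelve. all: by end_near.
Qed.

Lemma mu_le_fm M t : 0 < t -> matrix_measure nu M <= fm M t.
Proof.
move=> t0; apply: limr_le; first exact: fm_cvg.
near=> e; apply: fm_mono.
  by near: e; exact: nbhs_right_gt.
by apply: ltW; near: e; exact: nbhs_right_lt.
Unshelve. all: by end_near.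
Qed.


Lemma hstep (B E : 'M[R]_n.+1) c K e : is_diag_mx E -> 0 <= K ->
  (forall i, E i i <= c) -> (forall i, -K <= E i i) ->
  0 < e -> e < (K + 1)^-1 -> fm (B + E) (e / 2) <= fm B e + c.
Proof.
move=> /is_diag_mxP hd K0 hc hK e0 eK.
have eK1 : e * K < 1.
  have : e * (K + 1) < 1 by rewrite -ltr_pdivlMr ?div1r // ltr_wpDl.
  have : 0 <= e by apply: ltW.
  nra.
have hdiag : induced_norm nu (1%:M + e *: E) <= 1 + e * c.
  apply: N_diag.
    apply/is_diag_mxP => i j ij; rewrite !mxE hd // mulr0 addr0.
    by have -> : (i == j) = false by apply/negbTE; apply: contra ij => /eqP ->.
  move=> i; rewrite !mxE eqxx mulr1n; apply/andP; split.
    have : e * (- K) <= e * E i i by apply: ler_wpM2l; [apply: ltW|].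
    nra.
  by rewrite lerD2l ler_wpM2l // ltW.
have eq : 1%:M + (e / 2) *: (B + E) =
   2^-1 *: (1%:M + e *: B) + 2^-1 *: (1%:M + e *: E).
  by apply/matrixP => i j; rewrite !mxE; field.
have h2 : 0 <= (2 : R)^-1 by rewrite invr_ge0.
have h := N_conv (1%:M + e *: B) (1%:M + e *: E) _ _ h2 h2.
rewrite -eq in h.
have e2 : 0 < e / 2 by rewrite divr_gt0.
rewrite /fm ler_pdivrMr //.
have -> : ((induced_norm nu (1%:M + e *: B) - 1) / e + c) * (e / 2)
   = 2^-1 * induced_norm nu (1%:M + e *: B) - 2^-1 + 2^-1 * (e * c).
  by field; rewrite lt0r_neq0.
have : 2^-1 * induced_norm nu (1%:M + e *: E) <= 2^-1 * (1 + e * c) by apply: ler_wpM2l.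
lra.
Qed.


Lemma key2 (B E : 'M[R]_n.+1) c K : is_diag_mx E -> 0 <= K ->
  (forall i, E i i <= c) -> (forall i, -K <= E i i) ->
  matrix_measure nu (B + E) <= matrix_measure nu B + c.
Proof.
move=> hd K0 hc hK.
have Kp : 0 < (K+1)^-1 by rewrite invr_gt0; lra.
rewrite -lerBlDr; apply: limr_ge; first exact: fm_cvg.
near=> e.
have e0 : 0 < e by near: e; exact: nbhs_right_gt.
have eK : e < (K+1)^-1 by near: e; exact: nbhs_right_lt.
have h1 := hstep B E c K e hd K0 hc hK e0 eK.
have h2 := mu_le_fm (B + E) _ (divr_gt0 e0 (ltr0Sn _ 1)).
rewrite -/(fm B e).
lra.
Unshelve. all: by end_near.
Qed.

End S.

Theorem proposition1 (R : realType) (n : nat) (nu : 'cV[R]_n.+1 -> R) :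
  is_vnorm nu -> orthant_monotonic nu ->
  forall (A D : 'M[R]_n.+1), is_diag_mx D ->
    matrix_measure nu A - max_diag D <= matrix_measure nu (A - D) /\
    matrix_measure nu (A - D) <= matrix_measure nu A - min_diag D.
Proof.
move=> Hn Ho A D hD.
have hmax i : D i i <= max_diag D.
  by rewrite /max_diag (bigD1 i) //= le_max lexx.
have hmin i : min_diag D <= D i i.
  by rewrite /min_diag (bigD1 i) //= ge_min lexx.
have nM := ler_norm (max_diag D).
have nm := ler_norm (- min_diag D); rewrite normrN in nm.
split.
  have := @key2 R n nu Hn Ho (A - D) D (max_diag D) `|min_diag D| hD (normr_ge0 _) hmax.
  rewrite subrK => H.
  have : matrix_measure nu A <= matrix_measure nu (A - D) + max_diag D.
    by apply: H => i; have := hmin i; lra.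
  lra.
have hD' : is_diag_mx (- D).
  apply/is_diag_mxP => i j ij; rewrite mxE.
  by move/is_diag_mxP: hD => ->; rewrite ?oppr0.
have := @key2 R n nu Hn Ho A (- D) (- min_diag D) `|max_diag D| hD' (normr_ge0 _).
move=> H.
have : matrix_measure nu (A - D) <= matrix_measure nu A + - min_diag D.
  apply: H => i; rewrite mxE; have := hmin i; have := hmax i; lra.
lra.
Qed.
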